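(* For any time complexity function $t$, $$\mathrm{IP}(\mathrm{constant\ space},\ \infty\ \mathrm{private\ random\ bits},\ \infty\ \mathrm{public\ random\ bits},\ O(t(n))\ \mathrm{time})\subseteq\mathrm{IP}(\mathrm{constant\ space},\ O(n)\ \mathrm{private\ random\ bits},\ O(n)\ \mathrm{public\ random\ bits},\ O(n)\ \mathrm{time}),$$ and the same inclusion holds for the $\mathrm{IP}^{\mathrm{high}}$ variants of the two classes.
   Context: Interactive proof systems. A verifier is a probabilistic Turing machine with a read-only input tape containing $\rhd w\lhd$, a read-write work tape, and a read-write communication cell shared with a prover. Its states may flip private coins (fair random bits hidden from the prover), flip public coins (fair random bits revealed to the prover; public-coin states are communication states), and/or write to the communication cell. In each step, based on the state, scanned symbols and coin outcomes, it changes state, writes on the work tape, writes to the communication cell (if in a communication state), and moves its heads. Each time the verifier writes to the communication cell, the prover overwrites it with a symbol that is an arbitrary function of $w$, the history of public coin outcomes, and the communication symbols so far. The verifier halts on entering accept/reject; it may run forever. $V$ verifies $L$ with error $\varepsilon=\max(\varepsilon^+,\varepsilon^-)$, $\varepsilon^\pm<1/2$, if some prover makes $V$ accept every $w\in L$ with probability at least $1-\varepsilon^+$, and for every prover and every $w\notin L$, $V$ halts and rejects with probability at least $1-\varepsilon^-$. $\mathrm{IP}^{\mathrm{high}}(\ldots)$ is the class of languages verifiable with some error $\varepsilon<1/2$ by verifiers within the listed resource bounds; $\mathrm{IP}(\ldots)$ is the class of languages verifiable with arbitrarily low error (for every $\varepsilon>0$ there is a verifier within the bounds with error at most $\varepsilon$).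 All bounds here are worst-case functions of the input length $n$; constant space means $O(1)$ work-tape cells; $\infty$ means no bound. *)

(* Defs.v *)
From mathcomp Require Import all_boot.
From Stdlib Require Import Reals.

Set Implicit Arguments.
Unset Strict Implicit.
Unset Printing Implicit Defensive.

(* Symbols of the read-only input tape |> w <| *)
Inductive tsym (S : Type) := LEnd | REnd | Sym of S.
Arguments LEnd {S}. Arguments REnd {S}.

Inductive mv := MvL | MvS | MvR.

(* Content of input cell i of |> w <| : cell 0 is |>, cells 1..n hold w,
   cell n+1 is <|. *)
Definition inp (S : Type) (w : seq S) (i : nat) : tsym S :=
  if i == 0 then LEnd else
  match drop i.-1 w with a :: _ => Sym a | [::] => REnd end.

(* input head stays on cells 0 .. n+1 *)
Definition move_in (n i : nat) (m : mv) : nat :=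
  match m with MvL => i.-1 | MvS => i | MvR => minn i.+1 n.+1 end.

(* work tape is one-way infinite: cells 0,1,2,... *)
Definition move_w (i : nat) (m : mv) : nat :=
  match m with MvL => i.-1 | MvS => i | MvR => i.+1 end.

Record verifier (Sigma : Type) := Verifier {
  vQ : finType;
  vG : finType;                 (* work tape alphabet *)
  vC : finType;                 (* communication alphabet *)
  vq0 : vQ;
  vacc : vQ;
  vrej : vQ;
  vacc_rej : vacc != vrej;
  vpriv : vQ -> bool;           (* state flips a private coin *)
  vpub : vQ -> bool;            (* state flips a public coin *)
  vcomm : vQ -> bool;
  vpub_comm : forall q, vpub q -> vcomm q;
  vblank : vG;
  vcblank : vC;                 (* initial content of the communication cell *)
  (* transition: state, scanned input symbol, scanned work symbol, scanned
     communication symbol, private coin, public coin  |->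
     new state, work symbol written, communication symbol written (only
     effective in communication states), input head move, work head move *)
  vdelta : vQ -> tsym Sigma -> vG -> vC -> bool -> bool ->
           vQ * vG * vC * mv * mv
}.

(* A prover: the reply written into the communication cell is an arbitrary
   function of the input w, the history of public coin outcomes, and the
   sequence of symbols the verifier has written so far. *)
Definition prover (Sigma : Type) (V : verifier Sigma) :=
  seq Sigma -> seq bool -> seq (vC V) -> vC V.

Record config (Sigma : Type) (V : verifier Sigma) := Config {
  cq : vQ V;
  cih : nat;                    (* input head position *)
  ctape : nat -> vG V;
  cwh : nat;                    (* work head position *)
  ccell : vC V;
  cpub : seq bool;
  chist : seq (vC V);           (* symbols written by the verifier *)
  csteps : nat;
  cprivs : nat;
  cpubs : nat
}.

Section Semantics.
Variables (Sigma : Type) (V : verifier Sigma).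

Definition init : config V :=
  @Config Sigma V (vq0 V) 0 (fun _ => vblank V) 0 (vcblank V) [::] [::] 0 0 0.

Definition halted (c : config V) : bool :=
  (cq c == vacc V) || (cq c == vrej V).

(* One step with coin outcomes bp (private) and bq (public); the coins are
   only used if the current state actually flips them. *)
Definition step (w : seq Sigma) (P : prover V) (c : config V)
    (bp bq : bool) : config V :=
  let q := cq c in
  let bp' := vpriv q && bp in
  let bq' := vpub q && bq in
  let '(q', g', x', m1, m2) :=
    vdelta q (inp w (cih c)) (ctape c (cwh c)) (ccell c) bp' bq' in
  let pub' := if vpub q then rcons (cpub c) bq' else cpub c in
  let hist' := if vcomm q then rcons (chist c) x' else chist c in
  let cell' := if vcomm q then P w pub' hist' else ccell c in
  @Config Sigma V q' (move_in (size w) (cih c) m1)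
    (fun j => if j == cwh c then g' else ctape c j)
    (move_w (cwh c) m2) cell' pub' hist'
    (csteps c).+1 (cprivs c + vpriv q) (cpubs c + vpub q).

Inductive reach (w : seq Sigma) (P : prover V) : config V -> Prop :=
| reach0 : reach w P init
| reachS c bp bq : reach w P c -> ~~ halted c -> reach w P (step w P c bp bq).

Fixpoint hit_within (w : seq Sigma) (P : prover V) (goal : vQ V)
    (T : nat) (c : config V) : R :=
  match T with
  | 0 => if cq c == goal then 1%R else 0%R
  | T'.+1 =>
      if halted c then (if cq c == goal then 1%R else 0%R)
      else (/4 * (hit_within w P goal T' (step w P c false false)
                + hit_within w P goal T' (step w P c false true)
                + hit_within w P goal T' (step w P c true false)
                + hit_within w P goal T' (step w P c true true)))%R
  end.

End Semantics.

(* The (monotone) limit of f is at least p. *)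
Definition prob_at_least (f : nat -> R) (p : R) : Prop :=
  forall d : R, (0 < d)%R -> exists T, (p - d <= f T)%R.

Definition verifies (Sigma : Type) (V : verifier Sigma)
    (L : seq Sigma -> Prop) (ep em : R) : Prop :=
  (ep < 1/2)%R /\ (em < 1/2)%R /\
  (forall w, L w -> exists P : prover V,
      prob_at_least (fun T => hit_within w P (vacc V) T (init V)) (1 - ep)) /\
  (forall w, ~ L w -> forall P : prover V,
      prob_at_least (fun T => hit_within w P (vrej V) T (init V)) (1 - em)).

Definition bigO (g f : nat -> nat) : Prop :=
  exists k n0, forall n, n0 <= n -> g n <= k * f n.

(* worst-case (over inputs of length n, provers, coin outcomes) bound on a
   resource measured on reachable configurations; None = no bound (infinity) *)
Definition within (Sigma : Type) (V : verifier Sigma)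
    (meas : config V -> nat) (b : option (nat -> nat)) : Prop :=
  match b with
  | None => True
  | Some f => exists g, bigO g f /\
      forall w (P : prover V) c, reach w P c -> meas c <= g (size w)
  end.

Record bounds := Bounds {
  bspace : option (nat -> nat);
  bpriv : option (nat -> nat);
  bpub : option (nat -> nat);
  btime : option (nat -> nat)
}.

Definition within_bounds (Sigma : Type) (V : verifier Sigma) (b : bounds) :=
  within (@cwh _ V) (bspace b) /\ within (@cprivs _ V) (bpriv b) /\
  within (@cpubs _ V) (bpub b) /\ within (@csteps _ V) (btime b).

Definition IP_high (Sigma : Type) (b : bounds) (L : seq Sigma -> Prop) :=
  exists V : verifier Sigma, within_bounds V b /\
    exists ep em, verifies V L ep em.

Definition IP (Sigma : Type) (b : bounds) (L : seq Sigma -> Prop) :=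
  forall eps : R, (0 < eps)%R -> exists V : verifier Sigma,
    within_bounds V b /\
    exists ep em, (ep <= eps)%R /\ (em <= eps)%R /\ verifies V L ep em.

Definition const_space : option (nat -> nat) := Some (fun _ => 1).

Definition left_bounds (t : nat -> nat) : bounds :=
  Bounds const_space None None (Some t).

Definition right_bounds : bounds :=
  Bounds const_space (Some (fun n => n)) (Some (fun n => n)) (Some (fun n => n)).

(* Main.v *)
Require Import Defs.
From mathcomp Require Import all_boot zify.
From Stdlib Require Import Reals.

Set Implicit Arguments.
Unset Strict Implicit.
Unset Printing Implicit Defensive.

Section Pf.
Variables (Sigma : Type) (V : verifier Sigma).

Definition entry := (bool * bool * vC V)%type.

Definition keyT (n B : nat) : finType :=
  (vQ V * 'I_n.+2 * {ffun 'I_B.+1 -> vG V} * 'I_B.+1 * vC V)%type.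

Definition key (n B : nat) (c : config V) : keyT n B :=
  (cq c, inord (cih c), [ffun i : 'I_B.+1 => ctape c i], inord (cwh c), ccell c).

Lemma card_keyT n B :
  #|keyT n B| = #|vQ V| * n.+2 * expn #|vG V| B.+1 * B.+1 * #|vC V|.
Proof. by rewrite /keyT !card_prod card_ffun !card_ord. Qed.

Definition sim B (c c' : config V) :=
  [/\ cq c = cq c', cih c = cih c', cwh c = cwh c', ccell c = ccell c'
   & forall i, i <= B -> ctape c i = ctape c' i].

Lemma sim_refl B c : sim B c c.
Proof. by split. Qed.
Lemma sim_sym B c c' : sim B c c' -> sim B c' c.
Proof. by case=> h1 h2 h3 h4 h5; split=> // i Hi; rewrite h5. Qed.
Lemma sim_trans B c1 c2 c3 : sim B c1 c2 -> sim B c2 c3 -> sim B c1 c3.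
Proof.
case=> h1 h2 h3 h4 h5 [g1 g2 g3 g4 g5]; split; try congruence.
by move=> i Hi; rewrite h5 // g5.
Qed.

Lemma halted_sim B c c' : sim B c c' -> halted c = halted c'.
Proof. by rewrite /halted; case=> ->. Qed.

Lemma key_sim n B c c' : cih c <= n.+1 -> cih c' <= n.+1 ->
  cwh c <= B -> cwh c' <= B -> key n B c = key n B c' -> sim B c c'.
Proof.
move=> h1 h2 h3 h4; rewrite /key; case=> Hq Hih Htp Hwh Hcl; split=> //.
- by have := congr1 (@nat_of_ord n.+2) Hih; rewrite !inordK.
- by have := congr1 (@nat_of_ord B.+1) Hwh; rewrite !inordK.
- move=> i Hi; have := congr1 (fun f : {ffun 'I_B.+1 -> vG V} => f (inord i)) Htp.
  by rewrite !ffunE inordK.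
Qed.

Section W.
Variable w : seq Sigma.

Definition stepX (c : config V) (e : entry) : config V :=
  step w (fun _ _ _ => e.2) c e.1.1 e.1.2.

Lemma step_csteps (P : prover V) (c : config V) bp bq : csteps (step w P c bp bq) = (csteps c).+1.
Proof. rewrite /step; by case: vdelta => [[[[q g] x] m1] m2]. Qed.

Lemma step_cprivs (P : prover V) (c : config V) bp bq : cprivs (step w P c bp bq) = cprivs c + vpriv (cq c).
Proof. rewrite /step; by case: vdelta => [[[[q g] x] m1] m2]. Qed.

Lemma step_cpubs (P : prover V) (c : config V) bp bq : cpubs (step w P c bp bq) = cpubs c + vpub (cq c).
Proof. rewrite /step; by case: vdelta => [[[[q g] x] m1] m2]. Qed.

Lemma step_hist (P : prover V) (c : config V) bp bq :
  size (chist (step w P c bp bq)) = size (chist c) + vcomm (cq c).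
Proof.
rewrite /step; case: vdelta => [[[[q g] x] m1] m2] /=.
by case: vcomm => /=; rewrite ?size_rcons ?addn1 ?addn0.
Qed.

Lemma step_eq (P : prover V) (c : config V) bp bq :
  step w P c bp bq = stepX c (bp, bq, ccell (step w P c bp bq)).
Proof.
rewrite /stepX /step /=; case: vdelta => [[[[q g] x] m1] m2] /=.
by case: vcomm.
Qed.

Lemma sim_step B (c c' : config V) e : cwh c <= B -> sim B c c' -> sim B (stepX c e) (stepX c' e).
Proof.
case: c => q ih tp wh cl pb hs st pr pu; case: c' => q2 ih2 tp2 wh2 cl2 pb2 hs2 st2 pr2 pu2 /= Hwh.
case=> /= <- <- <- <- Ht.
rewrite /stepX /step /= -(Ht _ Hwh).
case: vdelta => [[[[q' g] x] m1] m2] /=.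
split=> //.
by move=> i Hi /=; case: (i == wh) => //; apply: Ht.
Qed.

Lemma reach_cih (P : prover V) (c : config V) : reach w P c -> cih c <= (size w).+1.
Proof.
elim => //= d bp bq _ IH _.
rewrite /step; case: vdelta => [[[[q g] x] m1] m2] /=.
case: m1 => /=; first exact: leq_trans (leq_pred _) IH.
  exact: IH.
exact: geq_minr.
Qed.

Lemma reach_res (P : prover V) (c : config V) : reach w P c -> cprivs c <= csteps c /\ cpubs c <= csteps c.
Proof.
elim => //= d bp bq _ [IH1 IH2] _.
rewrite step_cprivs step_cpubs step_csteps.
by case: vpriv; case: vpub => /=; lia.
Qed.

Lemma reach_ext (P P' : prover V) (c : config V) : reach w P c ->
  (forall pub h, size h <= size (chist c) -> P w pub h = P' w pub h) ->
  reach w P' c.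
Proof.
elim => [|d bp bq Hr IH Hh] H; first by constructor.
have Hs := step_hist P d bp bq.
have -> : step w P d bp bq = step w P' d bp bq.
  move: H Hs; rewrite /step; case: vdelta => [[[[q g] x] m1] m2] /=.
  by case: vcomm => /= H Hs //; rewrite H.
constructor => //; apply: IH => pub h Hh'; apply: H; rewrite Hs; lia.
Qed.

Lemma reach_stepX (c : config V) e : (exists P, reach w P c) -> ~~ halted c ->
  exists P, reach w P (stepX c e).
Proof.
case=> P Hr Hh; case: e => [[bp bq] x].
pose P' := fun w0 pub (h : seq (vC V)) =>
  if size h == (size (chist c)).+1 then x else P w0 pub h.
exists P'.
have Hr' : reach w P' c.
  apply: (@reach_ext P P' c Hr) => pub h Hs; rewrite /P'; case: eqP => //; lia.
have -> : stepX c (bp, bq, x) = step w P' c bp bq.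
  rewrite /stepX /step /P' /=; case: vdelta => [[[[q g] x'] m1] m2] /=.
  by case: vcomm => //=; rewrite size_rcons eqxx.
by constructor.
Qed.

Lemma reach_path (P : prover V) (c : config V) : reach w P c ->
  exists (f : nat -> config V) (es : nat -> entry) m,
  [/\ f 0 = init V, f m = c,
      forall i, i < m -> f i.+1 = stepX (f i) (es i) /\ ~~ halted (f i)
    & forall i, i <= m -> reach w P (f i)].
Proof.
elim => [|d bp bq Hr [f [es [m [H0 Hm Hs Hre]]]] Hh].
  exists (fun _ => init V), (fun _ => (false, false, vcblank V)), 0; split => //.
  by move=> i _; constructor.
set c' := step w P d bp bq.
exists (fun i => if i <= m then f i else c'),
  (fun i => if i == m then (bp, bq, ccell c') else es i), m.+1; split.
- by rewrite leq0n.
- by rewrite ltnn.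
- move=> i Hi; case: (ltngtP i m) => Him.
  + by apply: Hs.
  + lia.
  + subst i; rewrite Hm; split => //; exact: step_eq.
- move=> i Hi; case: ifP => Him; first exact: Hre.
  by apply: reachS.
Qed.

Fixpoint pump (c0 : config V) (es : nat -> entry) (a L m : nat) : config V :=
  match m with
  | 0 => c0
  | m'.+1 => stepX (pump c0 es a L m') (es (a + m' %% L))
  end.

Lemma pump_steps c0 es a L m : csteps (pump c0 es a L m) = csteps c0 + m.
Proof. elim: m => [|m IH] /=; first by rewrite addn0. by rewrite step_csteps IH addnS. Qed.

Lemma steps_bound B T (P : prover V) (c : config V) :
  (forall P (c : config V), reach w P c -> cwh c <= B) ->
  (forall P (c : config V), reach w P c -> csteps c <= T) ->
  reach w P c -> csteps c < #|keyT (size w) B|.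
Proof.
move=> HB HT Hr.
have [f [es [m [H0 Hm Hs Hre]]]] := reach_path Hr.
have Hst : forall i, i <= m -> csteps (f i) = i.
  elim=> [|i IH] Hi; first by rewrite H0.
  by have [-> _] := Hs i Hi; rewrite step_csteps IH // ltnW.
rewrite -Hm Hst //.
rewrite ltnNge; apply/negP => Hle.
pose kf := fun i : 'I_m.+1 => key (size w) B (f i).
have : ~~ injectiveb kf.
  apply/negP => /injectiveP /leq_card; rewrite card_ord; lia.
case/injectivePn => i1 [i2 Hne Hk].
have main : forall a b, a < b -> b <= m -> key (size w) B (f a) = key (size w) B (f b) -> False.
  move=> a b Hab Hbm Hkey.
  have Ham : a <= m by lia.
  have Hsim : sim B (f a) (f b).
    apply: key_sim Hkey; try apply: reach_cih; try apply: HB; apply: Hre => //.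
  pose L := b - a.
  have HL : 0 < L by rewrite /L subn_gt0.
  have Hmod : forall k, a + k %% L < b.
    move=> k; have := ltn_pmod k HL; rewrite /L; lia.
  have Hinv : forall k, sim B (f (a + k %% L)) (pump (f a) es a L k) /\
                        exists P, reach w P (pump (f a) es a L k).
    elim=> [|k [IH1 IH2]] /=.
      by rewrite mod0n addn0; split; [apply: sim_refl | exists P; apply: Hre].
    have Hk1 : a + k %% L < m by have := Hmod k; lia.
    have [Hf Hnh] := Hs _ Hk1.
    split; last first.
      apply: reach_stepX => //; by rewrite -(halted_sim IH1).
    have Hs1 : sim B (f (a + k %% L).+1) (pump (f a) es a L k.+1).
      rewrite Hf /=; apply: sim_step IH1.
      by apply: HB; apply: Hre; rewrite ltnW.
    have Hlt := ltn_pmod k HL.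
    case: (ltngtP (k %% L).+1 L) => HkL.
    + have -> : k.+1 %% L = (k %% L).+1.
        rewrite {1}(divn_eq k L) -addnS modnMDl modn_small //.
      by rewrite addnS.
    + lia.
    + have -> : k.+1 %% L = 0.
        by rewrite {1}(divn_eq k L) -addnS HkL -mulSnr modnMl.
      rewrite addn0.
      have Eb : b = (a + k %% L).+1 by rewrite -addnS HkL /L; lia.
      rewrite -Eb in Hs1; exact: sim_trans Hsim Hs1.
  have [_ [P' Hr']] := Hinv T.+1.
  have := HT _ _ Hr'; rewrite pump_steps; lia.
case: (ltngtP i1 i2) => H12.
- by apply: (main i1 i2) => //; rewrite -ltnS.
- by apply: (main i2 i1) => //; rewrite -ltnS.
- by move: Hne; rewrite (val_inj H12) eqxx.
Qed.

End W.
End Pf.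

Lemma right_ok (Sigma : Type) (V : verifier Sigma) (t : nat -> nat) :
  within_bounds V (left_bounds t) -> within_bounds V right_bounds.
Proof.
case=> [[gs [[k0 [n0 Hk]] Hs]] [_ [_ [gt [_ Ht]]]]].
pose g := fun n => #|keyT V n (gs n)|.
have Hg : bigO g (fun n => n).
  exists (#|vQ V| * 3 * expn #|vG V| k0.+1 * k0.+1 * #|vC V|), (maxn n0 1).
  move=> n; rewrite geq_max => /andP [Hn0 Hn1].
  rewrite /g card_keyT.
  have HG : 0 < #|vG V| by apply/card_gt0P; exists (vblank V).
  have Hgs : gs n <= k0 by have := Hk n Hn0; rewrite muln1.
  apply: (@leq_trans (#|vQ V| * (3 * n) * expn #|vG V| k0.+1 * k0.+1 * #|vC V|)).
    apply: leq_mul => //; apply: leq_mul; last by rewrite ltnS.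
    apply: leq_mul; last by apply: leq_pexp2l.
    apply: leq_mul => //; lia.
  set X := expn _ _; set Q := #|vQ V|; set C := #|vC V|.
  apply: eq_leq; lia.
have Hst : forall w (P : prover V) c, reach w P c -> csteps c <= g (size w).
  move=> w P c Hr; apply: ltnW; apply: (steps_bound (T := gt (size w))) Hr.
    by move=> P' c' Hr'; apply: Hs Hr'.
  by move=> P' c' Hr'; apply: Ht Hr'.
split; first by exists gs; split => //; exists k0, n0.
split; first by exists g; split => // w P c Hr; apply: leq_trans (Hst _ _ _ Hr);
  case: (reach_res Hr).
split; first by exists g; split => // w P c Hr; apply: leq_trans (Hst _ _ _ Hr);
  case: (reach_res Hr).
by exists g.
Qed.

Theorem theorem3 (Sigma : finType) (t : nat -> nat) (L : seq Sigma -> Prop) :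
  (IP (left_bounds t) L -> IP right_bounds L) /\
  (IP_high (left_bounds t) L -> IP_high right_bounds L).
Proof.
split.
- move=> H eps Heps; have [V [Hb Hv]] := H eps Heps.
  by exists V; split => //; apply: right_ok Hb.
- case=> V [Hb Hv]; exists V; split => //; apply: right_ok Hb.
Qed.
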